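(* Let $X,Y$ be spaces and $F\colon\mathcal{K}(X)\to\mathcal{K}(Y)$ a map. Consider the conditions: (1) if $K,L\in\mathcal{K}(X)$ and $K\subset L$, then $F(K)\subset F(L)$; (2) for each $L\in\mathcal{K}(Y)$ there is $K\in\mathcal{K}(X)$ with $L\subset F(K)$; $(2)_c$ for each countable $L\in\mathcal{K}(Y)$ there is $K\in\mathcal{K}(X)$ with $L\subset F(K)$; $(3)_c$ if $U\subset X$ and $V\subset Y$ are non-empty open sets such that for each countable compact $L\subset V$ there is a compact $K\subset U$ with $L\subset F(K)$, then for any open cover $\mathcal{W}$ of $U$ and any $y\in V$ there exist a finite $\mathcal{E}\subset\mathcal{W}$ and a neighborhood $V_y$ of $y$ such that every countable compact $L\subset V_y$ satisfies $L\subset F(K)$ for some compact $K\subset\bigcup\mathcal{E}$. Then: (a) if $F$ satisfies (1) and (2), $X$ is Lindelöf and $Y$ is a $\mu$-complete $q$-space, then $F$ is monotone set tri-quotient; (b) if $X$ is separable metrizable and $Y$ is first countable, then $F$ satisfies $(3)_c$; moreover, in this case, if $F$ also satisfies (1) and $(2)_c$, then $F$ is monotone set tri-quotient.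
   Context: All spaces are completely regular. $\mathcal{K}(X)$ is the set of compact subsets of $X$, $\mathcal{T}(X)$ the topology of $X$. $F\colon\mathcal{K}(X)\to 2^Y$ is monotone if $K\subset L$ implies $F(K)\subset F(L)$; it is set tri-quotient if there is $s\colon\mathcal{T}(X)\to\mathcal{T}(Y)$ with: (str1) $s(U)\subset\bigcup\{F(K):K\in\mathcal{K}(X),K\subset U\}$; (str2) $s(X)=Y$; (str3) $U\subset V\Rightarrow s(U)\subset s(V)$; (str4) if $y\in s(U)$ and $\mathcal{W}$ is a cover of $\bigcup\{K\in F^{-1}(y):K\subset U\}$ by open subsets of $X$, then $y\in s(\bigcup\mathcal{E})$ for some finite $\mathcal{E}\subset\mathcal{W}$, where $F^{-1}(y)=\{K\in\mathcal{K}(X):y\in F(K)\}$. $Y$ is $\mu$-complete ($\mu$-space) if every closed bounded subset is compact, where $A$ is bounded if every continuous real function is bounded on $A$. $Y$ is a $q$-space if each $y\in Y$ has a sequence of neighborhoods $U_n$ such that whenever $y_n\in U_n$ for all $n$, $\{y_n\}$ has a cluster point in $Y$. *)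

(* Defs.v *)
From HB Require Import structures.
From mathcomp Require Import all_boot all_order all_algebra.
From mathcomp Require Import all_classical all_reals all_analysis.
From mathcomp Require Import Rstruct Rstruct_topology.
From Stdlib Require Import Rdefinitions.
Set Implicit Arguments. Unset Strict Implicit. Unset Printing Implicit Defensive.
Import Order.TTheory GRing.Theory Num.Theory.
Local Open Scope classical_set_scope.
Local Open Scope ring_scope.

(** Completely regular (Tychonoff, Engelking's convention): T1 and points can
    be separated from closed sets by continuous real-valued functions. *)
Definition completely_regular (T : topologicalType) : Prop :=
  accessible_space T /\
  forall (a : T) (B : set T), closed B -> ~ B a ->
    exists f : T -> R, continuous f /\ f a = 0 /\ (forall b, B b -> f b = 1).

(** A subset [A] is bounded: every continuous real function is bounded on [A]. *)
Definition fbounded (T : topologicalType) (A : set T) : Prop :=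
  forall f : T -> R, continuous f ->
    exists M : R, forall x : T, A x -> (`|f x| <= M).

Definition mu_complete (T : topologicalType) : Prop :=
  forall A : set T, closed A -> fbounded A -> compact A.

Definition q_space (T : topologicalType) : Prop :=
  forall y : T, exists U : nat -> set T, (forall n, nbhs y (U n)) /\
    forall yn : nat -> T, (forall n, U n (yn n)) ->
      exists z : T, forall N, nbhs z N -> forall m : nat, exists n : nat, leq m n /\ N (yn n).

Definition lindelof (T : topologicalType) : Prop :=
  forall W : set (set T), (forall w, W w -> open w) ->
    \bigcup_(w in W) w = setT ->
    exists E : set (set T), E `<=` W /\ countable E /\ \bigcup_(w in E) w = setT.

Definition metrizable (T : topologicalType) : Prop :=
  exists d : T -> T -> R,
    (forall x y, (0 <= d x y)) /\
    (forall x y, d x y = 0 <-> x = y) /\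
    (forall x y, d x y = d y x) /\
    (forall x y z, (d x z <= d x y + d y z)) /\
    (forall A : set T, open A <->
       forall x, A x -> exists e : R, (0 < e) /\ [set y | (d x y < e)] `<=` A).

Definition separable (T : topologicalType) : Prop :=
  exists D : set T, countable D /\ closure D = setT.

Definition first_countable (T : topologicalType) : Prop :=
  forall y : T, exists B : nat -> set T, (forall n, nbhs y (B n)) /\
    forall N, nbhs y N -> exists n, B n `<=` N.

(** A map F : K(X) -> 2^Y is represented by [F : set X -> set Y];
    only its values on compact sets are ever used. *)
Section maps.
Variables (X Y : topologicalType) (F : set X -> set Y).

Definition compact_valued : Prop := forall K, compact K -> compact (F K).

Definition monotone_map : Prop :=
  forall K L : set X, compact K -> compact L -> K `<=` L -> F K `<=` F L.

Definition cond2 : Prop :=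
  forall L : set Y, compact L -> exists K : set X, compact K /\ L `<=` F K.

Definition cond2c : Prop :=
  forall L : set Y, compact L -> countable L ->
    exists K : set X, compact K /\ L `<=` F K.

Definition cond3c : Prop :=
  forall (U : set X) (V : set Y), open U -> open V -> U !=set0 -> V !=set0 ->
    (forall L : set Y, compact L -> countable L -> L `<=` V ->
       exists K : set X, compact K /\ K `<=` U /\ L `<=` F K) ->
    forall W : set (set X), (forall w, W w -> open w) -> U `<=` \bigcup_(w in W) w ->
    forall y : Y, V y ->
      exists E : set (set X), E `<=` W /\ finite_set E /\
        exists Vy : set Y, nbhs y Vy /\
          forall L : set Y, compact L -> countable L -> L `<=` Vy ->
            exists K : set X, compact K /\ K `<=` \bigcup_(w in E) w /\ L `<=` F K.

Definition Finv_union (y : Y) (U : set X) : set X :=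
  \bigcup_(K in [set K : set X | compact K /\ F K y /\ K `<=` U]) K.

(** set tri-quotient; s : T(X) -> T(Y) is represented by a function on sets
    whose values on open sets are open. *)
Definition set_tri_quotient : Prop :=
  exists s : set X -> set Y,
    (forall U, open U -> open (s U)) /\
    (forall U, open U ->
       s U `<=` \bigcup_(K in [set K : set X | compact K /\ K `<=` U]) F K) /\
    s setT = setT /\
    (forall U V, open U -> open V -> U `<=` V -> s U `<=` s V) /\
    (forall U, open U -> forall y, s U y ->
       forall W : set (set X), (forall w, W w -> open w) ->
         Finv_union y U `<=` \bigcup_(w in W) w ->
         exists E : set (set X), E `<=` W /\ finite_set E /\
           s (\bigcup_(w in E) w) y).

Definition monotone_set_tri_quotient : Prop :=
  monotone_map /\ set_tri_quotient.

End maps.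

(* Main.v *)
Require Import Defs.
From HB Require Import structures.
From mathcomp Require Import all_boot all_order all_algebra.
From mathcomp Require Import all_classical all_reals all_analysis.
From mathcomp Require Import Rstruct Rstruct_topology.
From mathcomp Require Import lra finmap.
From Stdlib Require Import Rdefinitions.
Import Order.TTheory GRing.Theory Num.Theory.
Local Open Scope classical_set_scope.
Local Open Scope ring_scope.

Lemma ctsP (T : topologicalType) (f : T -> R) (x : T) (e : R) :
  continuous f -> 0 < e -> nbhs x [set z | `|f x - f z| < e].
Proof.
move=> cf e0; have := cf x (ball (f x) e) (nbhsx_ballx _ _ e0).
by [].
Qed.

Lemma half_gt0 : (0 : R) < 1/2.
Proof. by rewrite divr_gt0. Qed.

Lemma ar_a (K : realFieldType) (t : K) : `|0 - t| < 1/2 -> t < 1/2.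
Proof. rewrite sub0r normrN => /ltr_normlP [h1 h2]; lra. Qed.

Lemma ar_b (K : realFieldType) (t : K) : `|1 - t| < 1/2 -> t < 1/2 -> False.
Proof. move=> /ltr_normlP [h1 h2]; lra. Qed.
Definition ptT (T : topologicalType) (x : T) : Type := T.
HB.instance Definition _ (T : topologicalType) (x : T) := Topological.copy (ptT T x) T.
HB.instance Definition _ (T : topologicalType) (x : T) := isPointed.Build (ptT T x) x.
Lemma compact_coverT (T : topologicalType) (K : set T) : compact K -> cover_compact K.
Proof.
move=> cK; have [[x Kx]|K0] := pselect (K !=set0).
  have cK' : @compact (ptT T x) K := cK.
  by rewrite compact_cover in cK'.
move=> I D f _ _; exists fset0 => // z Kz; exfalso; apply: K0; by exists z.
Qed.

Arguments compact_coverT {T K}.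

Lemma cover_compactT (T : topologicalType) (K : set T) : cover_compact K -> compact K.
Proof.
move=> cK; have [[x Kx]|K0] := pselect (K !=set0).
  suff : @compact (ptT T x) K by [].
  by rewrite compact_cover.
suff -> : K = set0 by exact: compact0.
apply/seteqP; split => // z Kz; exfalso; apply: K0; by exists z.
Qed.
Lemma reg (T : topologicalType) (crT : completely_regular T) (y : T) (N : set T) :
  nbhs y N -> exists N', nbhs y N' /\ closed N' /\ N' `<=` N.
Proof.
move=> yN; case: crT => _ /(_ y (~` N°)).
have cl : closed (~` N°) by rewrite closedC; exact: open_interior.
have ny : ~ (~` N°) y by move/(_ yN).
move=> /(_ cl ny) [f [cf [f0 f1]]].
exists (closure (f @^-1` [set r | r < 1/2])).
split.
  apply: filterS (@subset_closure _ _) _.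
  have := @ctsP _ f y (1/2) cf half_gt0.
  by apply: filterS => z /=; rewrite f0 => /ar_a.
split; first exact: closed_closure.
move=> z clz; apply: contrapT => nNz.
have f1z : f z = 1 by apply: f1 => /interior_subset.
have [w [/= w1 w2]] := clz _ (@ctsP _ f z (1/2) cf half_gt0).
by move: w2; rewrite f1z => /ar_b; apply.
Qed.

Lemma enum_fam T (E : set (set T)) : countable E ->
  exists g : nat -> set T, (forall n, g n = set0 \/ E (g n)) /\
    (forall e, E e -> exists n, g n = e).
Proof.
move=> /countable_injP [f finj].
exists (fun n => [set x | exists e, E e /\ f e = n /\ e x]); split.
  move=> n; have [[e [Ee fe]]|ne] := pselect (exists e, E e /\ f e = n).
    right; suff -> : [set x | exists e, E e /\ f e = n /\ e x] = e by [].
    apply/seteqP; split => x /=.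
      move=> [e' [Ee' [fe' e'x]]].
      have -> : e = e' by apply: finj; [exact: mem_set|exact: mem_set|by rewrite fe fe'].
      done.
    by move=> ex; exists e.
  left; apply/seteqP; split => x //= [e [Ee [fe _]]]; apply: ne; by exists e.
move=> e Ee; exists (f e).
apply/seteqP; split => x /=.
  move=> [e' [Ee' [fe' e'x]]].
  have -> : e = e' by apply: finj; [exact: mem_set|exact: mem_set|by rewrite fe'].
  done.
by move=> ex; exists e.
Qed.

Lemma cpt_seq (T : topologicalType) (K : set T) (g : nat -> set T) : compact K ->
  (forall n, open (g n)) -> K `<=` \bigcup_n g n ->
  exists n : nat, K `<=` \bigcup_(j in [set j : nat | leq j.+1 n]) g j.
Proof.
move=> /compact_coverT cK og Kg.
have [D' _ KD] := cK nat setT g (fun i _ => og i) Kg.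
exists (\max_(i <- D') i).+1 => x /KD [i /= iD gix]; exists i => //=.
rewrite ltnS; exact: (@leq_bigmax_seq _ _ xpredT id).
Qed.
Lemma MK (T : topologicalType) (C : set T) (B L : nat -> set T) :
  compact C ->
  (forall O, open O -> C `<=` O -> exists N, forall n, leq N n -> B n `<=` O) ->
  (forall n, compact (L n) /\ L n `<=` B n) ->
  compact (C `|` \bigcup_n L n).
Proof.
move=> cC hB hL; apply: cover_compactT => I D f fo cov.
have [D0 sD0 CD0] := compact_coverT cC I D f fo (fun x Cx => cov x (or_introl Cx)).
have oO : open (cover [set` D0] f).
  by apply: bigcup_open => i Hi; apply: fo; apply: set_mem; apply: sD0.
have [N hN] := hB _ oO CD0.
have [D1 [sD1 hD1]] : exists D1 : {fset I}, {subset D1 <= D} /\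
    forall k, leq k.+1 N -> L k `<=` cover [set` D1] f.
  elim: (N) => [|M [D1 [sD1 hD1]]]; first by exists fset0; split.
  have [D2 sD2 LD2] := compact_coverT (hL M).1 I D f fo
    (fun x Lx => cov x (or_intror (ex_intro2 _ _ M Logic.I Lx))).
  exists (D1 `|` D2)%fset; split.
    by move=> i; rewrite in_fsetU => /orP [/sD1|/sD2].
  move=> k; rewrite ltnS leq_eqVlt => /orP [/eqP ->|/hD1 h] x.
    by move=> /LD2 [i Hi fx]; exists i => //=; rewrite in_fsetU Hi orbT.
  by move=> /h [i Hi fx]; exists i => //=; rewrite in_fsetU Hi.
exists (D0 `|` D1)%fset.
  by move=> i; rewrite in_fsetU => /orP [/sD0|/sD1].
move=> x [/CD0 [i Hi fx]|[k _ Lkx]].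
  by exists i => //=; rewrite in_fsetU Hi.
have [kN|Nk] := ltnP k N.
  by have [i Hi fx] := hD1 k kN x Lkx; exists i => //=; rewrite in_fsetU Hi orbT.
have [i Hi fx] := hN k Nk x ((hL k).2 x Lkx).
by exists i => //=; rewrite in_fsetU Hi.
Qed.

Section Gen.
Variables (X Y : topologicalType) (F : set X -> set Y) (Lp : set Y -> Prop).

Definition Pp (Z : set X) (V : set Y) := forall L, Lp L -> L `<=` V ->
  exists K, compact K /\ K `<=` Z /\ L `<=` F K.
Definition SeqP (V : set Y) (B : nat -> set Y) := forall L : nat -> set Y,
  (forall n, Lp (L n) /\ L n `<=` B n) ->
  exists M, Lp M /\ (forall n, L n `<=` M) /\ M `<=` V.

Lemma diag V B S (T : nat -> set X) : SeqP V B -> Pp S V ->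
  (forall K, compact K -> K `<=` S -> exists n, K `<=` T n) ->
  exists n, Pp (T n) (B n).
Proof.
move=> hS hP hT; apply: contrapT => nP.
have : forall n, exists L, Lp L /\ L `<=` B n /\
    forall K, compact K -> K `<=` T n -> ~ L `<=` F K.
  move=> n; apply: contrapT => nL; apply: nP; exists n => L Lp' LB.
  apply: contrapT => nK; apply: nL; exists L; split => //; split => //.
  by move=> K cK KT LF; apply: nK; exists K.
move=> /choice [L hL].
have [M [LpM [LM MV]]] := hS L (fun n => let: conj a (conj b _) := hL n in conj a b).
have [K [cK [KS MF]]] := hP M LpM MV.
have [n KT] := hT K cK KS.
have [_ [_ h]] := hL n; apply: (h K cK KT) => x Lx.
by apply: MF; apply: LM Lx.
Qed.

Lemma gen (hs : forall y, Lp [set y])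
  (hB : forall (y : Y) (V : set Y), nbhs y V -> exists B, (forall n, nbhs y (B n)) /\ SeqP V B)
  (hLX : forall (Z : set X) (W : set (set X)), closed Z ->
     (forall w, W w -> open w) -> Z `<=` \bigcup_(w in W) w ->
     exists (Zn : nat -> set X) (En : nat -> set (set X)),
       (forall n, closed (Zn n) /\ En n `<=` W /\ finite_set (En n) /\
          Zn n `<=` \bigcup_(w in En n) w) /\
       (forall K, compact K -> K `<=` Z -> exists n, K `<=` Zn n))
  (h2 : Pp setT setT) (hm : monotone_map F) : set_tri_quotient F.
Proof.
pose s := fun U : set X =>
  [set y : Y | exists Z V, closed Z /\ Z `<=` U /\ nbhs y V /\ Pp Z V].
have s1 : forall (y : Y) (V : set Y), nbhs y V -> [set y] `<=` V.
  by move=> y V yV z ->; exact: nbhs_singleton yV.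
exists s; split.
  move=> U _; rewrite openE => y [Z [V [cZ [ZU [yV PZV]]]]].
  apply: filterS (nbhs_interior yV) => z zV; exists Z, V; by [].
split.
  move=> U _ y [Z [V [cZ [ZU [yV PZV]]]]].
  have [K [cK [KZ yK]]] := PZV _ (hs y) (s1 _ _ yV).
  exists K; last exact: yK y erefl.
  by split => //; apply: subset_trans KZ ZU.
split.
  apply/seteqP; split => // y _; exists setT, setT.
  by split; [exact: closedT|split => //; split; [exact: filterT|exact: h2]].
split.
  move=> U V _ _ UV y [Z [V' [cZ [ZU rest]]]]; exists Z, V'.
  by split => //; split => //; exact: subset_trans ZU UV.
move=> U _ y [Z [V [cZ [ZU [yV PZV]]]]] W oW covA.
have [K0 [cK0 [K0Z yK0]]] := PZV _ (hs y) (s1 _ _ yV).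
have ZW : Z `<=` \bigcup_(w in W) w.
  move=> x Zx; apply: covA; exists (K0 `|` [set x]); last by right.
  have cK : compact (K0 `|` [set x]) by apply: compactU => //; exact: compact_set1.
  split => //; split.
    by apply: (hm _ _ cK0 cK (@subsetUl _ _ _)); exact: yK0 y erefl.
  by move=> z [/K0Z/ZU|->] //; apply: ZU.
have [Zn [En [hZn hK]]] := hLX Z W cZ oW ZW.
have [B [nB sB]] := hB y V yV.
have [n Pn] := diag V B Z Zn sB PZV hK.
have [cZn [EW [fE ZE]]] := hZn n.
exists (En n); split => //; split => //.
by exists (Zn n), (B n).
Qed.
End Gen.

Lemma LX (X : topologicalType) (crX : completely_regular X) (lX : lindelof X)
  (Z : set X) (W : set (set X)) : closed Z ->
     (forall w, W w -> open w) -> Z `<=` \bigcup_(w in W) w ->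
     exists (Zn : nat -> set X) (En : nat -> set (set X)),
       (forall n, closed (Zn n) /\ En n `<=` W /\ finite_set (En n) /\
          Zn n `<=` \bigcup_(w in En n) w) /\
       (forall K, compact K -> K `<=` Z -> exists n, K `<=` Zn n).
Proof.
move=> cZ oW ZW.
pose O := [set o : set X | open o /\ ((exists2 w, W w & closure o `<=` w) \/ o = ~` Z)].
have Ocov : \bigcup_(o in O) o = setT.
  apply/seteqP; split => // x _.
  have [Zx|nZx] := pselect (Z x).
    have [w Ww wx] := ZW x Zx.
    have [N' [xN' [cN' N'w]]] := reg _ crX _ _ (open_nbhs_nbhs (conj (oW w Ww) wx)).
    exists N'°; last exact: xN'.
    split; first exact: open_interior.
    left; exists w => //; apply: subset_trans N'w.
    apply: subset_trans (closureS (@interior_subset _ _)) _; exact: cN'.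
  by exists (~` Z) => //; split; [rewrite openC|right].
have [E [EO [cE Ecov]]] := lX O (fun o Oo => Oo.1) Ocov.
have [g [g0E gE]] := enum_fam _ E cE.
have og : forall n, open (g n).
  by move=> n; case: (g0E n) => [->|/EO []]; [exact: open0|].
pose good n := exists2 w, W w & closure (g n) `<=` w.
have /choice [wf hwf] : forall n, exists w : set X, good n -> W w /\ closure (g n) `<=` w.
  move=> n; have [[w Ww cw]|ng] := pselect (good n); first by exists w.
  by exists set0 => /ng.
pose Zn n := Z `&` \bigcup_(j in [set j | leq j.+1 n /\ good j]) closure (g j).
pose En n := [set wf j | j in [set j | leq j.+1 n /\ good j]].
have fin : forall n, finite_set [set j | leq j.+1 n /\ good j].
  by move=> n; apply: (sub_finite_set _ (finite_II n)) => j [].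
exists Zn, En; split.
  move=> n; split.
    apply: closedI => //; apply: closed_bigcup => // j _; exact: closed_closure.
  split; first by move=> w [j [_ gj] <-]; exact: (hwf j gj).1.
  split; first exact: finite_image.
  move=> x [Zx [j [jn gj] cx]]; exists (wf j); first by exists j.
  exact: (hwf j gj).2 x cx.
move=> K cK KZ.
have Kg : K `<=` \bigcup_n g n.
  move=> x Kx; have : (setT : set X) x by [].
  rewrite -Ecov => -[e Ee ex]; have [n gn] := gE e Ee; exists n => //.
  by rewrite gn.
have [n Kn] := cpt_seq _ _ _ cK og Kg.
exists n => x Kx; split; first exact: KZ.
have [j jn gjx] := Kn x Kx; exists j; last exact: subset_closure.
split => //.
case: (g0E j) => [g0|/EO [_ [//|gZ]]]; first by move: gjx; rewrite g0.
by move: gjx; rewrite gZ => /(_ (KZ x Kx)).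
Qed.

Lemma decr (T : Type) (B : nat -> set T) : (forall n, B n.+1 `<=` B n) ->
  forall m n, leq m n -> B n `<=` B m.
Proof.
move=> h m n /subnKC <-; elim: (subn n m) => [|k IH]; first by rewrite addn0.
by rewrite addnS; apply: subset_trans (h _) IH.
Qed.
Arguments decr {T B} _ {m n}.

Lemma countU (T : Type) (A B : set T) : countable A -> countable B ->
  countable (A `|` B).
Proof.
move=> cA cB.
have -> : A `|` B = \bigcup_(b in [set: bool]) (if b then A else B).
  apply/seteqP; split => x.
    by case=> h; [exists true|exists false].
  by case=> -[] _ h; [left|right].
by apply: bigcup_countable => // -[].
Qed.

Lemma ar_c (K : realFieldType) (a b M N : K) : `|a - b| < 1 -> `|a| + 1 < M ->
  M <= N -> N < `|b| -> False.
Proof.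
move=> h1 h2 h3 h4; have := ler_normB a (a - b).
have -> : a - (a - b) = b by rewrite opprB addrC subrK.
move=> h5; lra.
Qed.

Lemma hBb (Y : topologicalType) (fY : first_countable Y) (y : Y) (V : set Y) :
  nbhs y V -> exists B : nat -> set Y, (forall n, nbhs y (B n)) /\
    @SeqP Y (fun L => compact L /\ countable L) V B.
Proof.
move=> yV; have [Bf [nBf bBf]] := fY y.
pose fix B n := if n is m.+1 then B m `&` Bf m.+1 else V `&` Bf 0.
have nB : forall n, nbhs y (B n).
  by elim => [|n IH] /=; apply: filterI.
have BV : forall n, B n `<=` V.
  by elim => [|n IH] /=; [move=> x []|move=> x [/IH]].
have dB : forall n, B n.+1 `<=` B n by move=> n x [].
have BBf : forall n, B n `<=` Bf n by case => [|n] x [].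
exists B; split => // L hL.
exists ([set y] `|` \bigcup_n L n); split.
  split.
    apply: (@MK _ _ B) => //; first exact: compact_set1.
      move=> O oO yO; have [k hk] := bBf O (open_nbhs_nbhs (conj oO (yO y erefl))).
      exists k => n kn; apply: subset_trans (decr dB kn) _.
      exact: subset_trans (BBf k) hk.
    by move=> n; have [[? _] ?] := hL n.
  apply: countU; first exact: countable1.
  by apply: bigcup_countable => // n _; have [[_ ?] _] := hL n.
split; first by move=> n x Lx; right; exists n.
move=> x [->|[n _ Lx]]; first exact: nbhs_singleton yV.
have [_ h] := hL n; exact: BV (h x Lx).
Qed.

Lemma hBa (Y : topologicalType) (crY : completely_regular Y)
  (muY : mu_complete Y) (qY : q_space Y) (y : Y) (V : set Y) :
  nbhs y V -> exists B : nat -> set Y, (forall n, nbhs y (B n)) /\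
    @SeqP Y compact V B.
Proof.
move=> yV; have [U [nU qU]] := qY y.
have /choice [sh hsh] : forall N : set Y, exists N',
    nbhs y N -> nbhs y N' /\ closed N' /\ N' `<=` N.
  move=> N; have [yN|nyN] := pselect (nbhs y N).
    by have [N' h] := reg _ crY _ _ yN; exists N'.
  by exists N.
pose fix B n := if n is m.+1 then sh (B m `&` U m.+1) else sh (V `&` U 0).
have hB : forall n, nbhs y (B n) /\ closed (B n) /\ B n `<=` U n /\ B n `<=` V.
  elim => [|n [h1 [h2 [h3 h4]]]] /=.
    have [a [b c]] := hsh _ (filterI yV (nU 0)).
    by split => //; split => //; split => x /c [].
  have [a [b c]] := hsh _ (filterI h1 (nU n.+1)).
  by split => //; split => //; split => x /c [] // /h4.
have dB : forall n, B n.+1 `<=` B n.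
  by move=> n /=; have [a [b c]] := hsh _ (filterI (hB n).1 (nU n.+1)) => x /c [].
pose C := \bigcap_n B n.
have clu : forall z : nat -> Y, (forall n, B n (z n)) -> exists w, C w /\
    forall N, nbhs w N -> forall m, exists n, leq m n /\ N (z n).
  move=> z hz; have [w hw] := qU z (fun n => (hB n).2.2.1 _ (hz n)).
  exists w; split => // m _; apply: contrapT => nBw.
  have oc : open (~` B m) by rewrite openC; exact: (hB m).2.1.
  have [n [mn zn]] := hw _ (open_nbhs_nbhs (conj oc nBw)) m.
  by apply: zn; apply: (decr dB mn); exact: hz.
have cC : compact C.
  apply: muY; first by apply: closed_bigI => n _; exact: (hB n).2.1.
  move=> f cf; apply: contrapT => nb.
  have /choice [c hc] : forall n : nat, exists x, C x /\ n%:R < `|f x|.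
    move=> n; apply: contrapT => h; apply: nb; exists n%:R => x Cx.
    apply: contrapT => h'; apply: h; exists x; split => //.
    by rewrite ltNge; apply/negP.
  have [w [Cw hw]] := clu c (fun n => (hc n).1 n Logic.I).
  have hb := archi_boundP (addr_ge0 (normr_ge0 (f w)) ler01).
  have [n [mn hn]] := hw _ (@ctsP _ f w 1 cf ltr01) (Num.bound (`|f w| + 1)).
  move: hn => /= hn. have h4 := (hc n).2.
  apply: (@ar_c R _ _ _ _ hn hb _ h4).
  by rewrite ler_nat.
have hv : forall O, open O -> C `<=` O -> exists N, forall n, leq N n -> B n `<=` O.
  move=> O oO CO; apply: contrapT => h.
  have /choice [z hz] : forall N, exists z, B N z /\ ~ O z.
    move=> N; apply: contrapT => h'; apply: h; exists N => n Nn x Bx.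
    apply: contrapT => nOx; apply: h'; exists x; split => //.
    by apply: (decr dB Nn).
  have [w [Cw hw]] := clu z (fun n => (hz n).1).
  have [n [_ zn]] := hw _ (open_nbhs_nbhs (conj oO (CO w Cw))) 0%N.
  exact: (hz n).2 zn.
exists B; split; first by move=> n; exact: (hB n).1.
move=> L hL; exists (C `|` \bigcup_n L n); split; first exact: MK hv hL.
split; first by move=> n x Lx; right; exists n.
move=> x [Cx|[n _ Lx]]; first exact: (hB 0%N).2.2.2 _ (Cx 0%N Logic.I).
have [_ h] := hL n; exact: (hB n).2.2.2 _ (h x Lx).
Qed.
Lemma ar_e (K : realFieldType) (e N : K) : 0 < e -> 2 / e < N -> 2 * N^-1 < e.
Proof.
move=> e0 h; have N0 : 0 < N by apply: lt_trans h; rewrite divr_gt0.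
rewrite ltr_pdivrMr // in h; rewrite ltr_pdivrMr //.
by rewrite mulrC.
Qed.

Lemma ar_d (K : realFieldType) (a b c r : K) : c <= a + b -> b < r - a -> c < r.
Proof. move=> h1 h2; lra. Qed.

Lemma ar_f (K : realFieldType) (a b c r e : K) : c <= a + b -> a < r -> b < r ->
  2 * r < e -> c < e.
Proof. move=> h1 h2 h3 h4; lra. Qed.

Lemma HL (X : topologicalType) (sX : separable X) (mX : metrizable X)
  (W : set (set X)) : (forall w, W w -> open w) ->
  exists E, E `<=` W /\ countable E /\
    \bigcup_(w in E) w = \bigcup_(w in W) w.
Proof.
move=> oW; have [D [cD clD]] := sX.
have [d [d0 [dxy [dsym [dtri dop]]]]] := mX.
have bo : forall x r, open [set z | d x z < r].
  move=> x r; apply/dop => z hz; exists (r - d x z); split.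
    by rewrite subr_gt0.
  by move=> u /= hu; apply: (@ar_d R _ _ _ _ (dtri x z u) hu).
pose adm (p : X * nat) := exists2 w, W w &
  [set z | d p.1 z < (p.2.+1)%:R^-1] `<=` w.
have /choice [ch hch] : forall p : X * nat, exists w, adm p ->
    W w /\ [set z | d p.1 z < (p.2.+1)%:R^-1] `<=` w.
  move=> p; have [[w Ww hw]|np] := pselect (adm p); first by exists w.
  by exists set0 => /np.
pose A := [set p : X * nat | D p.1 /\ adm p].
exists (ch @` A); split.
  by move=> w [p [Dp ap] <-]; exact: (hch p ap).1.
split.
  apply: (sub_countable (card_image_le ch A)).
  apply: (@sub_countable _ _ A (D `*` [set: nat])).
    by apply: subset_card_le => p [].
  by apply: countableX.
apply/seteqP; split => x.
  by move=> [w [p [Dp ap] <-] hx]; exists (ch p) => //; exact: (hch p ap).1.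
move=> [w Ww wx].
have [e [e0 ew]] := (dop w).1 (oW w Ww) x wx.
have hb := archi_boundP (ltW (divr_gt0 (ltr0Sn _ 1) e0)).
set k := Num.bound _ in hb.
have r0 : (0 : R) < (k.+1)%:R^-1 by rewrite invr_gt0 ltr0Sn.
have h2r : 2 * (k.+1)%:R^-1 < e.
  apply: ar_e => //; apply: lt_le_trans hb _; rewrite ler_nat; exact: leqnSn.
have xcl : closure D x by rewrite clD.
have hxx : d x x < (k.+1)%:R^-1 by rewrite (proj2 (dxy x x) erefl).
have [q [Dq xq]] := xcl _ (open_nbhs_nbhs (conj (bo x _) hxx)).
have aq : adm (q, k).
  exists w => // z /= hz; apply: ew => /=.
  apply: (@ar_f R _ _ _ _ _ (dtri x q z) xq hz h2r).
exists (ch (q, k)); first by exists (q, k).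
by apply: (hch _ aq).2 => /=; rewrite dsym.
Qed.

Lemma lind_of (X : topologicalType) (sX : separable X) (mX : metrizable X) :
  lindelof X.
Proof.
move=> W oW cov; have [E [EW [cE EE]]] := HL _ sX mX _ oW.
by exists E; split => //; split => //; rewrite EE.
Qed.

Lemma c3c (X Y : topologicalType) (F : set X -> set Y) (sX : separable X)
  (mX : metrizable X) (fY : first_countable Y) : cond3c F.
Proof.
move=> U V oU oV _ _ hUV W oW UW y Vy.
have [E [EW [cE EuW]]] := HL _ sX mX _ oW.
have [g [g0E gE]] := enum_fam _ E cE.
have og : forall n, open (g n).
  by move=> n; case: (g0E n) => [->|/EW/oW //]; exact: open0.
pose En n := [set g j | j in [set j | leq j.+1 n /\ W (g j)]].
have [B [nB sB]] := hBb _ fY _ _ (open_nbhs_nbhs (conj oV Vy)).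
have PUV : Pp X Y F (fun L => compact L /\ countable L) U V.
  by move=> L [cL ctL] LV; exact: hUV L cL ctL LV.
have hT : forall K, compact K -> K `<=` U ->
    exists n, K `<=` \bigcup_(w in En n) w.
  move=> K cK KU.
  have Kg : K `<=` \bigcup_n g n.
    move=> x Kx; have : (\bigcup_(w in W) w) x by exact: UW (KU x Kx).
    rewrite -EuW => -[e Ee ex]; have [n gn] := gE e Ee; exists n => //.
    by rewrite gn.
  have [n Kn] := cpt_seq _ _ _ cK og Kg.
  exists n => x Kx; have [j jn gjx] := Kn x Kx.
  exists (g j) => //; exists j => //; split => //.
  by case: (g0E j) => [g0|/EW //]; move: gjx; rewrite g0.
have [n Pn] := diag _ _ _ _ _ _ _ _ sB PUV hT.
exists (En n); split; first by move=> w [j [_ Wj] <-].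
split.
  by apply: finite_image; apply: (sub_finite_set _ (finite_II n)) => j [].
exists (B n); split => // L cL ctL LB.
exact: (Pn L (conj cL ctL) LB).
Qed.

Local Close Scope ring_scope.

Theorem proposition2p2 (X Y : topologicalType)
  (crX : completely_regular X) (crY : completely_regular Y)
  (F : set X -> set Y) (hF : compact_valued F) :
  (monotone_map F -> cond2 F -> lindelof X -> mu_complete Y -> q_space Y ->
     monotone_set_tri_quotient F) /\
  (separable X -> metrizable X -> first_countable Y ->
     cond3c F /\ (monotone_map F -> cond2c F -> monotone_set_tri_quotient F)).
Proof.
split.
  move=> hm h2 lX muY qY; split => //.
  apply: (@gen X Y F compact) => //.
  - exact: compact_set1.
  - move=> y V yV; exact: hBa _ crY muY qY _ _ yV.
  - move=> Z W cZ oW ZW; exact: LX _ crX lX _ _ cZ oW ZW.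
  - by move=> L cL _; have [K [cK LK]] := h2 L cL; exists K.
move=> sX mX fY; split; first exact: c3c _ _ _ sX mX fY.
move=> hm h2; split => //.
apply: (@gen X Y F (fun L => compact L /\ countable L)) => //.
- by move=> y; split; [exact: compact_set1|exact: countable1].
- move=> y V yV; exact: hBb _ fY _ _ yV.
- move=> Z W cZ oW ZW; exact: LX _ crX (lind_of _ sX mX) _ _ cZ oW ZW.
- by move=> L [cL ctL] _; have [K [cK LK]] := h2 L cL ctL; exists K.
Qed.
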